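(* Let $(X,\rho)$, $X_0$, $\mu_x^U$, $\mathcal H(U)$, $\mathcal U_0$ be as in the context, and suppose that there exist $\alpha\in(0,1)$ and $K\ge1$ such that for all $U(x_0,R)\in\mathcal U_0$ and all $h\in\mathcal H_b^+(U(x_0,R))$ one has $\sup_{U(x_0,\alpha R)}h\le K\inf_{U(x_0,\alpha R)}h$. Then: 1. For all $U(x_0,R)\in\mathcal U_0$ and all $h\in\mathcal H^+(U(x_0,R))$, $\sup_{U(x_0,\alpha R)}h\le K\inf_{U(x_0,\alpha R)}h$. 2. If for all $U\in\mathcal U(X_0)$ the functions in $\mathcal H_b^+(U)$ are continuous on $U$, then for all $U\in\mathcal U(X_0)$ the functions in $\mathcal H^+(U)$ are continuous on $U$.
   Context: $(X,\rho)$ is a separable metric space; $\mathcal M(X)$ denotes the finite Borel measures on $X$ (also regarded on universally measurable sets), $\|\mu\|:=\mu(X)$, $\varepsilon_x$ the Dirac measure. For open $Y\subseteq X$, $\mathcal U(Y)$ is the set of open $U$ with $\overline U\subseteq Y$. $X_0\subseteq X$ is open. For every $x\in X$ and $U\in\mathcal U(X_0)$ a measure $\mu_x^U\in\mathcal M(X)$ is given such that for all $x$ and $U,V\in\mathcal U(X_0)$: (M0) $\mu_x^U(U)=0$, $\|\mu_x^U\|\le1$, $\mu_x^U=\varepsilon_x$ if $x\notin U$; (M1) $y\mapsto\mu_y^U(E)$ is universally measurable for every Borel $E$, and $\mu_x^U=\int\mu_y^U\,d\mu_x^V(y)$ whenever $V\subseteq U$. For $U\in\mathcal U(X_0)$,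 $\mathcal H(U)$ is the set of universally measurable real functions $h$ on $X$ such that for all $V\in\mathcal U(U)$ and $x\in V$, $h$ is $\mu_x^V$-integrable with $\int h\,d\mu_x^V=h(x)$; $\mathcal H^+(U)$, $\mathcal H_b^+(U)$ are its nonnegative, resp. bounded nonnegative, elements. $U(x,r)$ is the open $\rho$-ball, $R_0(x):=\sup\{r>0:\overline{U(x,r)}\subseteq X_0\}$ for $x\in X_0$, and $\mathcal U_0:=\{U(x,r):x\in X_0,\ r<R_0(x)\}$. *)

(* Defs.v *)
From HB Require Import structures.
From mathcomp Require Import all_boot all_order all_algebra.
From mathcomp Require Import all_classical all_reals all_analysis measurable_realfun.
Set Implicit Arguments. Unset Strict Implicit. Unset Printing Implicit Defensive.
Import Order.TTheory GRing.Theory Num.Theory.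
Local Open Scope classical_set_scope.
Local Open Scope ring_scope.

Section defs.
Context {d : measure_display} {X : measurableType d} {R : realType}.
Implicit Types (rho : X -> X -> R).

Definition is_metric rho : Prop :=
  [/\ (forall x y, 0 <= rho x y), (forall x y, rho x y = 0 <-> x = y),
      (forall x y, rho x y = rho y x) &
      (forall x y z, rho x z <= rho x y + rho y z)].

Definition rball rho (x : X) (r : R) : set X := [set y | rho x y < r].

Definition ropen rho (U : set X) : Prop :=
  forall x, U x -> exists r : R, 0 < r /\ rball rho x r `<=` U.

Definition rclosure rho (A : set X) : set X :=
  [set x | forall r : R, 0 < r -> exists y, A y /\ rho x y < r].

Definition rseparable rho : Prop :=
  exists D : set X, countable D /\
    forall x (r : R), 0 < r -> exists y, D y /\ rho x y < r.

Definition rborel rho : Prop :=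
  forall A : set X, measurable A <-> <<s ropen rho >> A.

Definition rcont_on rho (U : set X) (h : X -> R) : Prop :=
  forall x, U x -> forall e : R, 0 < e -> exists dl : R, 0 < dl /\
    forall y, U y -> rho x y < dl -> `|h y - h x| < e.

Definition calU rho (Y U : set X) : Prop := ropen rho U /\ rclosure rho U `<=` Y.

Definition R0 rho (X0 : set X) (x : X) : \bar R :=
  ereal_sup [set r%:E | r in [set r : R | 0 < r /\ rclosure rho (rball rho x r) `<=` X0]].

Definition umeas (A : set X) : Prop :=
  forall nu : {measure set X -> \bar R}, (nu setT < +oo)%E ->
    exists B C : set X, [/\ measurable B, measurable C, B `<=` A, A `<=` C &
                            nu (C `\` B) = 0%E].

Definition umeas_fun (h : X -> R) : Prop :=
  forall B : set R, measurable B -> umeas (h @^-1` B).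

Definition umeas_efun (f : X -> \bar R) : Prop :=
  forall B : set (\bar R), measurable B -> umeas (f @^-1` B).

Definition cintegrable (nu : {measure set X -> \bar R}) (h : X -> R) : Prop :=
  (@completed_measure_extension _ _ _ nu).-integrable setT (fun x => (h x)%:E).

Definition cintegral (nu : {measure set X -> \bar R}) (f : X -> \bar R) : \bar R :=
  (\int[@completed_measure_extension _ _ _ nu]_x f x)%E.

(** hypotheses (M0), (M1) on the family mu U x = mu_x^U *)
Definition M0 rho (X0 : set X) (mu : set X -> X -> {measure set X -> \bar R}) : Prop :=
  forall (x : X) (U : set X), calU rho X0 U ->
    [/\ mu U x U = 0%E, (mu U x setT <= 1)%E &
        (~ U x -> forall E, measurable E -> mu U x E = \d_x E)].

Definition M1 rho (X0 : set X) (mu : set X -> X -> {measure set X -> \bar R}) : Prop :=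
  forall (x : X) (U V : set X), calU rho X0 U -> calU rho X0 V ->
    (forall E, measurable E -> umeas_efun (fun y => mu U y E)) /\
    (V `<=` U -> forall E, measurable E ->
        mu U x E = cintegral (mu V x) (fun y => mu U y E)).

Definition Hset rho (mu : set X -> X -> {measure set X -> \bar R}) (U : set X)
  (h : X -> R) : Prop :=
  umeas_fun h /\
  forall V, calU rho U V -> forall x, V x ->
    cintegrable (mu V x) h /\ cintegral (mu V x) (fun y => (h y)%:E) = (h x)%:E.

Definition Hplus rho mu U h : Prop := Hset rho mu U h /\ forall x, 0 <= h x.

Definition Hbplus rho mu U h : Prop :=
  Hplus rho mu U h /\ exists M : R, forall x, h x <= M.

Definition harnack_ineq rho (x0 : X) (r K : R) (h : X -> R) : Prop :=
  (ereal_sup [set (h y)%:E | y in rball rho x0 r] <=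
   K%:E * ereal_inf [set (h y)%:E | y in rball rho x0 r])%E.

End defs.

(* Main.v *)
Require Import Defs.
From HB Require Import structures.
From mathcomp Require Import all_boot all_order all_algebra.
From mathcomp Require Import all_classical all_reals all_analysis measurable_realfun.
From mathcomp Require Import ring lra.
Import Order.TTheory GRing.Theory Num.Theory.
Local Open Scope classical_set_scope.
Local Open Scope ring_scope.

Import HBNNSimple.
Section approx_int.
Context {R : realType}.
Local Open Scope ereal_scope.

Lemma int_approx (d' : measure_display) (T : measurableType d')
  (m : {measure set T -> \bar R}) (f : T -> \bar R) :
  measurable_fun setT f -> (forall x, 0 <= f x) -> forall n,
  \int[m]_x (approx setT f n x)%:E =
  \sum_(k < n * 2 ^ n) (k%:R * 2 ^- n)%:E * m (dyadic_approx setT f n k) +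
  n%:R%:E * m (integer_approx setT f n).
Proof.
move=> mf f0 n.
have mA k : measurable (dyadic_approx setT f n k).
  rewrite /dyadic_approx; case: ifPn => [kn|_]//; rewrite -preimage_comp.
  by apply: mf => //; apply/measurable_image_EFin; exact: measurable_itv.
have mB : measurable (integer_approx setT f n).
  exact: emeasurable_fun_c_infty.
rewrite /approx.
under eq_integral => x _ do rewrite EFinD -sumEFin.
rewrite ge0_integralD //; last 3 first.
- by move=> x _; apply: sume_ge0 => k _; rewrite lee_fin mulr_ge0 // indicE.
- apply: emeasurable_sum => k; apply/measurable_EFinP.
  by apply: measurable_funM => //; exact: measurable_indic.
- by apply/measurable_EFinP; apply: measurable_funM => //; exact: measurable_indic.
rewrite ge0_integral_sum //; last first.
  by move=> k; apply/measurable_EFinP; apply: measurable_funM => //; exact: measurable_indic.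
congr (_ + _).
  apply: eq_bigr => k _.
  under eq_integral => x _ do rewrite EFinM.
  rewrite ge0_integralZl_EFin //; last first.
    by apply/measurable_EFinP; exact: measurable_indic.
  by rewrite integral_indic // setIT.
under eq_integral => x _ do rewrite EFinM.
rewrite ge0_integralZl_EFin //; last first.
  by apply/measurable_EFinP; exact: measurable_indic.
by rewrite integral_indic // setIT.
Qed.

Lemma approx_mfun (d' : measure_display) (T : measurableType d') (f : T -> \bar R) n :
  measurable_fun setT f -> measurable_fun setT (approx setT f n).
Proof.
move=> mf; rewrite -(nnsfun_approxE measurableT mf); exact: measurable_funPT.
Qed.

Lemma int_approx_cvg (d' : measure_display) (T : measurableType d')
  (m : {measure set T -> \bar R}) (f : T -> \bar R) :
  measurable_fun setT f -> (forall x, 0 <= f x) ->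
  (fun n => \int[m]_x (approx setT f n x)%:E) @ \oo --> \int[m]_x f x.
Proof.
move=> mf f0.
have := @cvg_monotone_convergence _ _ _ m _ measurableT
  (fun n x => (approx setT f n x)%:E).
have -> : \int[m]_x f x = \int[m]_x limn (fun n => (approx setT f n x)%:E).
  apply: eq_integral => x _; apply/esym/cvg_lim => //.
  exact: (ecvg_approx (fun x _ => f0 x)).
apply.
- by move=> n; apply/measurable_EFinP; exact: approx_mfun.
- by move=> n x _; rewrite lee_fin; rewrite /approx addr_ge0 ?sumr_ge0 // => k _; rewrite mulr_ge0 // indicE.
- by move=> x _ a b ab; rewrite lee_fin; move: (nd_approx setT f ab) => /asboolP; apply.
Qed.

End approx_int.

Section S.
Context {d : measure_display} {X : measurableType d} {R : realType}.
Local Open Scope ereal_scope.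
Implicit Types (m : {measure set X -> \bar R}).

Lemma ext_dom m1 m2 (c : R) : (0 < c)%R ->
  (forall E, measurable E -> m1 E <= c%:E * m2 E) ->
  forall A, mu_ext m1 A <= c%:E * mu_ext m2 A.
Proof.
move=> c0 h A.
rewrite -lee_pdivrMl // /mu_ext.
apply: le_ereal_inf_tmp => _ [F FA <-].
rewrite lee_pdivrMl // -nneseriesZl; last by move=> *; exact: measure_ge0.
apply: (@le_trans _ _ (\sum_(k <oo) m1 (F k))).
  by apply: ereal_inf_lbound; exists F.
apply: lee_nneseries; first by move=> *; exact: measure_ge0.
by move=> k _; apply: h; case: FA.
Qed.


Notation CT m := (caratheodory_type (mu_ext m)).

Lemma null_cara m (N : set X) : mu_ext m N = 0 -> (mu_ext m).-cara.-measurable N.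
Proof.
move=> N0; apply: le_caratheodory_measurable => Y.
rewrite -[leRHS]add0e; apply: leeD.
  rewrite -N0; apply: (le_mu_ext m); exact: subIsetr.
by apply: (le_mu_ext m); exact: subIsetl.
Qed.

Lemma umeas_ext m (A : set X) : m setT < +oo -> @umeas _ _ R A ->
  exists B C : set X, [/\ measurable B, measurable C, B `<=` A, A `<=` C &
    m (C `\` B) = 0 /\ mu_ext m A = m B].
Proof.
move=> fin /(_ m fin) [B [C [mB mC BA AC CB0]]].
exists B, C; split => //; split => //.
apply/eqP; rewrite eq_le; apply/andP; split; last first.
  by rewrite -measurable_mu_extE //; apply: le_mu_ext.
apply: (@le_trans _ _ (mu_ext m C)); first exact: le_mu_ext.
rewrite measurable_mu_extE //.
have eC : C = B `|` (C `\` B).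
  apply/seteqP; split => x; first by case: (pselect (B x)) => ?; [left|right].
  by case => [/BA/AC|[]].
rewrite {1}eC measureU //.
- by rewrite [X in _ + X](_ : _ = 0%E) ?adde0 //; exact: CB0.
- exact: measurableD.
- by apply/seteqP; split => x // [? []].
Qed.

Lemma umeas_cara m (A : set X) : m setT < +oo -> @umeas _ _ R A ->
  (mu_ext m).-cara.-measurable A.
Proof.
move=> fin uA; have [B [C [mB mC BA AC [CB0 _]]]] := umeas_ext m A fin uA.
have -> : A = B `|` (A `\` B).
  apply/seteqP; split => x; first by case: (pselect (B x)) => ?; [left|right].
  by case => [/BA|[]].
apply: caratheodory_measurable_setU.
  exact: caratheodory_measurable_mu_ext.
apply: null_cara; apply/eqP; rewrite eq_le; apply/andP; split; last exact: mu_ext_ge0.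
rewrite -CB0.
rewrite -measurable_mu_extE; last exact: measurableD.
by apply: le_mu_ext => x [/AC ? ?].
Qed.

Lemma umeas_mfun m (f : X -> R) : m setT < +oo -> @umeas_fun _ _ R f ->
  measurable_fun (setT : set (CT m)) f.
Proof. by move=> fin uf _ B mB; rewrite setTI; apply: umeas_cara => //; exact: uf. Qed.

Lemma umeas_emfun m (f : X -> R) : m setT < +oo -> @umeas_fun _ _ R f ->
  measurable_fun (setT : set (CT m)) (fun x => (f x)%:E).
Proof. by move=> fin uf; apply: measurableT_comp => //; exact: umeas_mfun. Qed.

Lemma cint_le m1 m2 (c : R) (f : X -> \bar R) : (0 <= c)%R ->
  (forall x, 0 <= f x) ->
  measurable_fun (setT : set (CT m1)) f -> measurable_fun (setT : set (CT m2)) f ->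
  (forall A, mu_ext m1 A <= c%:E * mu_ext m2 A) ->
  cintegral m1 f <= c%:E * cintegral m2 f.
Proof.
move=> c0 f0 mf1 mf2 h; rewrite /cintegral.
have cv := int_approx_cvg _ _ (completed_measure_extension (mu:=m1)) f mf1 f0.
rewrite -(cvg_lim _ cv) //; apply: lime_le; first by apply/cvg_ex; eexists; exact: cv.
apply: nearW => n.
rewrite int_approx //.
apply: (@le_trans _ _ (c%:E * \int[completed_measure_extension (mu:=m2)]_x (approx setT f n x)%:E)); last first.
  apply: lee_wpmul2l; first by rewrite lee_fin.
  apply: ge0_le_integral => //.
  - by move=> x _; rewrite lee_fin /approx addr_ge0 ?sumr_ge0 // => k _; rewrite mulr_ge0 // indicE.
  - by apply/measurable_EFinP; exact: approx_mfun.
  - by move=> x _; apply: le_approx.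
rewrite int_approx // ge0_muleDr; first last.
- by apply: mule_ge0 => //; exact: measure_ge0.
- by apply: sume_ge0 => k _; apply: mule_ge0 => //; exact: measure_ge0.
apply: leeD.
  rewrite ge0_sume_distrr; last by move=> k _; apply: mule_ge0 => //; exact: measure_ge0.
  apply: lee_sum => k _; rewrite muleCA; apply: lee_wpmul2l => //; exact: h.
by rewrite muleCA; apply: lee_wpmul2l => //; exact: h.
Qed.

End S.

Section metric.
Context {d : measure_display} {X : measurableType d} {R : realType}.
Variable rho : X -> X -> R.
Hypothesis mr : is_metric rho.

Lemma rho_ge0 x y : 0 <= rho x y. Proof. by case: mr. Qed.
Lemma rho_xx x : rho x x = 0. Proof. by case: mr => _ h _ _; apply/h. Qed.
Lemma rhoC x y : rho x y = rho y x. Proof. by case: mr. Qed.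
Lemma rho_tri x y z : rho x z <= rho x y + rho y z. Proof. by case: mr. Qed.

Lemma rball_open x r : ropen rho (rball rho x r).
Proof.
move=> y yb; exists (r - rho x y); split; first by rewrite subr_gt0.
move=> z; rewrite /rball /= => yz.
by apply: (le_lt_trans (rho_tri x y z)); rewrite -ltrBrDl.
Qed.

Lemma sub_rclosure (A : set X) : A `<=` rclosure rho A.
Proof. by move=> x Ax r r0; exists x; rewrite rho_xx. Qed.

Lemma rclosure_mono (A B : set X) : A `<=` B -> rclosure rho A `<=` rclosure rho B.
Proof. by move=> AB x h r r0; have [y [Ay xy]] := h r r0; exists y; split => //; exact: AB. Qed.

Lemma rclosure_ball {x r r'} : r' < r -> rclosure rho (rball rho x r') `<=` rball rho x r.
Proof.
move=> rr z /(_ (r - r')); rewrite subr_gt0 => /(_ rr) [y [xy zy]].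
rewrite /rball /=; apply: (le_lt_trans (rho_tri x y z)).
by rewrite rhoC in zy; move: xy zy; rewrite /rball /=; lra.
Qed.

Lemma calU_ball {U x r r'} : 0 < r' -> r' < r -> rball rho x r `<=` U ->
  calU rho U (rball rho x r').
Proof.
move=> r'0 rr bU; split; first exact: rball_open.
by apply: subset_trans bU; exact: rclosure_ball.
Qed.

Lemma calU_trans {X0 U V : set X} : calU rho X0 U -> calU rho U V -> calU rho X0 V.
Proof.
move=> [oU cU] [oV cV]; split => //.
by apply: (subset_trans cV); apply: (subset_trans _ cU); exact: sub_rclosure.
Qed.

Lemma calU_sub {X0 U : set X} : calU rho X0 U -> U `<=` X0.
Proof. by move=> [_ cU]; apply: subset_trans cU; exact: sub_rclosure. Qed.

Lemma R0_closure {X0 : set X} {x r} : (r%:E < R0 rho X0 x)%E ->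
  rclosure rho (rball rho x r) `<=` X0.
Proof.
move=> /ereal_sup_gt [_ [s [s0 sX0] <-]]; rewrite lte_fin => rs.
apply: subset_trans sX0; apply: rclosure_mono => y; rewrite /rball /=.
by move=> h; apply: lt_trans rs.
Qed.

Lemma R0_gt {X0 : set X} {x s r} : 0 < s -> rclosure rho (rball rho x s) `<=` X0 ->
  r < s -> (r%:E < R0 rho X0 x)%E.
Proof.
move=> s0 sX rs; apply: (@lt_le_trans _ _ s%:E); first by rewrite lte_fin.
by apply: ereal_sup_ubound; exists s.
Qed.

End metric.
Arguments rho_ge0 {d X R rho} mr.
Arguments rho_xx {d X R rho} mr.
Arguments rhoC {d X R rho} mr.
Arguments rho_tri {d X R rho} mr.
Arguments rball_open {d X R rho} mr.
Arguments sub_rclosure {d X R rho} mr.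
Arguments rclosure_mono {d X R rho}.
Arguments rclosure_ball {d X R rho} mr {x r r'}.
Arguments calU_ball {d X R rho} mr {U x r r'}.
Arguments calU_trans {d X R rho} mr {X0 U V}.
Arguments calU_sub {d X R rho} mr {X0 U}.
Arguments R0_closure {d X R rho} {X0 x r}.
Arguments R0_gt {d X R rho} {X0 x s r}.

Section main.
Context {d : measure_display} {X : measurableType d} {R : realType}.
Variable rho : X -> X -> R.
Variable X0 : set X.
Variable mu : set X -> X -> {measure set X -> \bar R}.
Hypothesis mr : is_metric rho.
Hypothesis hM0 : M0 rho X0 mu.
Hypothesis hM1 : M1 rho X0 mu.
Local Notation CT m := (caratheodory_type (mu_ext m)).

Lemma mu_ge0 V y E : (0 <= mu V y E)%E. Proof. exact: measure_ge0. Qed.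

Lemma mu_le1 {V} y {E} : calU rho X0 V -> measurable E -> (mu V y E <= 1)%E.
Proof.
move=> cV mE; have [_ h1 _] := hM0 y V cV.
apply: le_trans h1; apply: le_measure => //; rewrite inE //.
Qed.

Lemma mu_fin {V} y {E} : calU rho X0 V -> measurable E -> mu V y E \is a fin_num.
Proof.
move=> cV mE; rewrite ge0_fin_numE ?mu_ge0 //.
by apply: (le_lt_trans (mu_le1 y cV mE)); exact: ltry.
Qed.

Lemma mu_finT {V} y : calU rho X0 V -> (mu V y setT < +oo)%E.
Proof. by move=> cV; apply: (le_lt_trans (mu_le1 y cV measurableT)); exact: ltry. Qed.

Lemma GB {V E} : calU rho X0 V -> measurable E ->
  Hbplus rho mu V (fun y => fine (mu V y E)).
Proof.
move=> cV mE.
have ug : @umeas_fun _ _ R (fun y => fine (mu V y E)).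
  move=> B mB.
  have [x0 _] : exists x : X, True by exists point.
  suff -> : (fun y => fine (mu V y E)) @^-1` B = (fun y => mu V y E) @^-1` (EFin @` B).
    exact: (hM1 x0 V V cV cV).1 E mE (EFin @` B) (measurable_image_EFin mB).
  apply/seteqP; split => y /=.
    by move=> By; exists (fine (mu V y E)) => //; rewrite fineK //; exact: mu_fin.
  by move=> [r Br rE]; rewrite -rE.
split; last first.
  exists 1 => y; rewrite -lee_fin fineK; [exact: mu_le1|exact: mu_fin].
split; last by move=> y; rewrite fine_ge0 // mu_ge0.
split => // W cW x Wx.
have cWX0 := calU_trans mr cV cW.
have WV := calU_sub mr cW.
have eqint : cintegral (mu W x) (fun y => (fine (mu V y E))%:E) = (fine (mu V x E))%:E.
  rewrite /cintegral.
  under eq_integral do rewrite fineK ?(mu_fin _ cV mE) //.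
  rewrite fineK ?(mu_fin _ cV mE) //.
  by rewrite ((hM1 x V W cV cWX0).2 WV E mE).
split => //.
apply/integrableP; split; first exact: (umeas_emfun _ _ (mu_finT x cWX0) ug).
under eq_integral do rewrite gee0_abs ?lee_fin ?fine_ge0 ?mu_ge0 //.
by move: eqint; rewrite /cintegral => ->; exact: ltry.
Qed.

Lemma DOM (alpha K : R) x0 r : 0 <= K -> 0 < r -> (r%:E < R0 rho X0 x0)%E ->
  (forall h, Hbplus rho mu (rball rho x0 r) h -> harnack_ineq rho x0 (alpha * r) K h) ->
  forall y z, rball rho x0 (alpha * r) y -> rball rho x0 (alpha * r) z ->
  forall E, measurable E ->
    (mu (rball rho x0 r) y E <= K%:E * mu (rball rho x0 r) z E)%E.
Proof.
move=> K0 r0 rR HH y z yb zb E mE.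
set V := rball rho x0 r.
have cV : calU rho X0 V by split; [exact: rball_open | exact: R0_closure].
have := HH _ (GB cV mE); rewrite /harnack_ineq => H.
rewrite -(fineK (mu_fin y cV mE)) -(fineK (mu_fin z cV mE)).
apply: (le_trans _ (le_trans H _)).
  by apply: ereal_sup_ubound; exists y.
apply: lee_wpmul2l; first by rewrite lee_fin.
by apply: ereal_inf_lbound; exists z.
Qed.


Lemma pair1 (alpha K : R) x0 r h : 0 < alpha -> alpha < 1 -> 0 < K -> 0 < r ->
  (r%:E < R0 rho X0 x0)%E ->
  (forall r', 0 < r' -> (r'%:E < R0 rho X0 x0)%E -> forall g,
     Hbplus rho mu (rball rho x0 r') g -> harnack_ineq rho x0 (alpha * r') K g) ->
  Hplus rho mu (rball rho x0 r) h ->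
  forall y z, rball rho x0 (alpha * r) y -> rball rho x0 (alpha * r) z ->
  h y <= K * h z.
Proof.
move=> a0 a1 K0 r0 rR HH [[uh hh] h0] y z yb zb.
set m := Num.max (rho x0 y) (rho x0 z).
have my : rho x0 y <= m by rewrite le_max lexx.
have mz : rho x0 z <= m by rewrite le_max lexx orbT.
have m0 : 0 <= m by apply: le_trans my; exact: rho_ge0.
have mar : m < alpha * r by rewrite gt_max; apply/andP.
set R' := (m + alpha * r) / (2 * alpha).
have eR : alpha * R' = (m + alpha * r) / 2.
  by rewrite /R'; field; rewrite gt_eqF.
have R'0 : 0 < R'.
  by rewrite -(pmulr_rgt0 _ a0) eR; lra.
have R'r : R' < r by rewrite -(ltr_pM2l a0) eR; lra.
have aR' : alpha * R' < R' by rewrite gtr_pMl.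
have yb' : rball rho x0 (alpha * R') y by rewrite /rball /= eR; lra.
have zb' : rball rho x0 (alpha * R') z by rewrite /rball /= eR; lra.
have R'R : (R'%:E < R0 rho X0 x0)%E by apply: lt_trans rR; rewrite lte_fin.
set V := rball rho x0 R'.
have dom := DOM _ _ _ _ (ltW K0) R'0 R'R (HH R' R'0 R'R) _ _ yb' zb'.
have cVU : calU rho (rball rho x0 r) V by apply: (calU_ball mr R'0 R'r).
have cV : calU rho X0 V by split; [exact: rball_open | exact: R0_closure].
have yV : V y by rewrite /V /rball /=; move: yb'; rewrite /rball /=; lra.
have zV : V z by rewrite /V /rball /=; move: zb'; rewrite /rball /=; lra.
have hy := (hh V cVU y yV).2.
have hz := (hh V cVU z zV).2.
have := cint_le (mu V y) (mu V z) K (fun x => (h x)%:E) (ltW K0).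
rewrite /= hy hz lee_fin; apply.
- by move=> x; rewrite lee_fin.
- exact: (umeas_emfun _ _ (mu_finT y cV) uh).
- exact: (umeas_emfun _ _ (mu_finT z cV) uh).
- exact: (ext_dom _ _ _ K0 dom).
Qed.

Lemma part1 (alpha K : R) x0 r h : 0 < alpha -> alpha < 1 -> 0 < K -> 0 < r ->
  (r%:E < R0 rho X0 x0)%E ->
  (forall r', 0 < r' -> (r'%:E < R0 rho X0 x0)%E -> forall g,
     Hbplus rho mu (rball rho x0 r') g -> harnack_ineq rho x0 (alpha * r') K g) ->
  Hplus rho mu (rball rho x0 r) h -> harnack_ineq rho x0 (alpha * r) K h.
Proof.
move=> a0 a1 K0 r0 rR HH hH.
have P := pair1 _ _ _ _ _ a0 a1 K0 r0 rR HH hH.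
have x0b : rball rho x0 (alpha * r) x0 by rewrite /rball /= rho_xx // mulr_gt0.
rewrite /harnack_ineq.
set S := [set (h y)%:E | y in rball rho x0 (alpha * r)].
have ub z : rball rho x0 (alpha * r) z -> (ereal_sup S <= (K * h z)%:E)%E.
  move=> zb; apply: ge_ereal_sup => _ [y yb <-]; rewrite lee_fin; exact: P.
case eS : (ereal_sup S) => [s| |]; last by rewrite leNye.
  rewrite -[s](@mulfVK _ K) ?gt_eqF // mulrC EFinM.
  apply: lee_wpmul2l; first by rewrite lee_fin ltW.
  apply: le_ereal_inf_tmp => _ [z zb <-]; rewrite lee_fin ler_pdivrMr // mulrC.
  by have := ub z zb; rewrite eS lee_fin.
by have := ub x0 x0b; rewrite eS leye_eq.
Qed.


Definition contat (x : X) (g : X -> R) := forall e, 0 < e ->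
  exists dl, 0 < dl /\ forall y, rho x y < dl -> `|g y - g x| < e.

Lemma contat_cst x (c : R) : contat x (fun=> c).
Proof. by move=> e e0; exists 1; split => // y _; rewrite subrr normr0. Qed.

Lemma contat_add x f g : contat x f -> contat x g -> contat x (fun y => f y + g y).
Proof.
move=> cf cg e e0.
have e20 : 0 < e / 2 by rewrite divr_gt0.
have [d1 [d10 h1]] := cf _ e20; have [d2 [d20 h2]] := cg _ e20.
exists (Num.min d1 d2); split; first by rewrite lt_min d10.
move=> y; rewrite lt_min => /andP [y1 y2].
have := h1 y y1; have := h2 y y2.
rewrite !ltr_norml => /andP [a b] /andP [c e'].
apply/andP; split; lra.
Qed.

Lemma contat_scale x (c : R) f : contat x f -> contat x (fun y => c * f y).
Proof.
move=> cf e e0.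
have ce0 : 0 < e / (`|c| + 1) by rewrite divr_gt0 // ltr_wpDl.
have [dl [dl0 h]] := cf _ ce0.
exists dl; split => // y xy.
rewrite -mulrBr normrM.
have := h y xy => hy.
apply: (le_lt_trans (y := (`|c| + 1) * `|f y - f x|)).
  by rewrite ler_wpM2r // lerDl.
by rewrite mulrC -ltr_pdivlMr // ltr_wpDl.
Qed.

Lemma sum_rep (nu : X -> {measure set X -> \bar R}) (P : X -> Prop) (x : X) N
  (c : nat -> R) (A : nat -> set X) :
  (forall k, exists g : X -> R, contat x g /\ forall y, P y -> mu_ext (nu y) (A k) = (g y)%:E) ->
  exists s, contat x s /\
    forall y, P y -> (\sum_(k < N) (c k)%:E * mu_ext (nu y) (A k))%E = (s y)%:E.
Proof.
move=> hA; elim: N => [|N [s [cs es]]].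
  by exists (fun=> 0); split; [exact: contat_cst|move=> y _; rewrite big_ord0].
have [g [cg eg]] := hA N.
exists (fun y => s y + c N * g y); split.
  by apply: contat_add => //; exact: contat_scale.
by move=> y Py; rewrite big_ord_recr /= es // eg // -EFinM -EFinD.
Qed.


Lemma meas_umeas (E : set X) : measurable E -> @umeas _ _ R E.
Proof. by move=> mE nu _; exists E, E; split => //; rewrite setDv measure0. Qed.

Lemma meas_split (m : {measure set X -> \bar R}) (B C : set X) :
  measurable B -> measurable C -> B `<=` C -> m C = (m B + m (C `\` B))%E.
Proof.
move=> mB mC BC.
have eC : C = B `|` (C `\` B).
  apply/seteqP; split => x; first by case: (pselect (B x)) => ?; [left|right].
  by case => [/BC|[]].
rewrite {1}eC measureU //.
- exact: measurableD.
- by apply/seteqP; split => x // [? []].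
Qed.

Lemma ext_rep (mx : {measure set X -> \bar R}) (K : R) A : 0 <= K ->
  (mx setT < +oo)%E -> @umeas _ _ R A ->
  exists B, measurable B /\ forall my : {measure set X -> \bar R},
    (forall E, measurable E -> (my E <= K%:E * mx E)%E) -> mu_ext my A = my B.
Proof.
move=> K0 fin uA; have [B [C [mB mC BA AC [CB0 _]]]] := umeas_ext mx A fin uA.
exists B; split => // my dom.
have mCB : measurable (C `\` B) by exact: measurableD.
have myCB : my (C `\` B) = 0%E.
  apply/eqP; rewrite eq_le measure_ge0 andbT.
  by apply: (le_trans (dom _ mCB)); rewrite CB0 mule0.
apply/eqP; rewrite eq_le; apply/andP; split.
  apply: (@le_trans _ _ (mu_ext my C)); first exact: le_mu_ext.
  rewrite measurable_mu_extE // (meas_split my B C mB mC (subset_trans BA AC)) myCB adde0.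
  by [].
by rewrite -measurable_mu_extE //; apply: le_mu_ext.
Qed.


Lemma umeas_dyadic (h : X -> R) n k : @umeas_fun _ _ R h ->
  @umeas _ _ R (dyadic_approx (T:=X) setT (fun z => (h z)%:E) n k).
Proof.
move=> uh; rewrite /dyadic_approx; case: ifPn => _; last exact: meas_umeas.
apply: (@eq_ind _ (h @^-1` [set` dyadic_itv R n k]) (@umeas _ _ R)).
  exact: uh (measurable_itv _).
apply/seteqP; split => z /=.
  by move=> hz; split => //; apply/mem_set; exists (h z).
move=> [_ /set_mem[r rI rE]]. have rh : r = h z by case: rE. by rewrite -rh.
Qed.

Lemma umeas_integer (h : X -> R) n : @umeas_fun _ _ R h ->
  @umeas _ _ R (integer_approx (T:=X) setT (fun z => (h z)%:E) n).
Proof.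
move=> uh; rewrite /integer_approx.
apply: (@eq_ind _ (h @^-1` [set` `[n%:R, +oo[%R]) (@umeas _ _ R)).
  exact: uh (measurable_itv _).
apply/seteqP; split => z /=.
  by rewrite in_itv /= andbT => hz; split => //; rewrite lee_fin.
by move=> [_]; rewrite lee_fin in_itv /= andbT.
Qed.


Lemma part2 (alpha K : R) : 0 < alpha -> alpha < 1 -> 1 <= K ->
  (forall (x0 : X) (r : R), X0 x0 -> 0 < r -> (r%:E < R0 rho X0 x0)%E ->
     forall h, Hbplus rho mu (rball rho x0 r) h ->
       harnack_ineq rho x0 (alpha * r) K h) ->
  (forall U, calU rho X0 U -> forall h, Hbplus rho mu U h -> rcont_on rho U h) ->
  forall U, calU rho X0 U -> forall h, Hplus rho mu U h -> rcont_on rho U h.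
Proof.
move=> a0 a1 K1 HH Hc U cU h [[uh hh] h0] x Ux e e0.
have K0 : 0 < K by apply: lt_le_trans K1.
have [r [r0 bU]] := cU.1 x Ux.
set r4 := r / 4.
have r40 : 0 < r4 by rewrite divr_gt0.
have r4r : r4 < r by rewrite /r4; lra.
set V := rball rho x r4.
have cVU : calU rho U V := calU_ball mr r40 r4r bU.
have cV : calU rho X0 V := calU_trans mr cU cVU.
have X0x : X0 x := calU_sub mr cU x Ux.
have R0x : (r4%:E < R0 rho X0 x)%E.
  apply: (@R0_gt _ _ _ _ _ _ (r / 2)); [by rewrite divr_gt0 | | by rewrite /r4; lra].
  apply: subset_trans (calU_sub mr cU).
  apply: subset_trans bU; apply: rclosure_ball => //; lra.
set ar := alpha * r4.
have ar0 : 0 < ar by rewrite mulr_gt0.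
have arr : ar < r4 by rewrite /ar gtr_pMl.
have xW : rho x x < ar by rewrite rho_xx.
have dom y : rho x y < ar -> forall E, measurable E -> (mu V y E <= K%:E * mu V x E)%E.
  by move=> yW; apply: (DOM _ _ _ _ (ltW K0) r40 R0x (HH x r4 X0x r40 R0x)).
have WV y : rho x y < ar -> V y by move=> ?; rewrite /V /rball /=; lra.
have finy y : (mu V y setT < +oo)%E := mu_finT y cV.
set mx := mu V x.
set phi := fun z => (h z)%:E.
have phi0 z : (0 <= phi z)%E by rewrite lee_fin.
have mphi y : measurable_fun (setT : set (CT (mu V y))) phi := umeas_emfun _ _ (finy y) uh.
set eta := e / (K + 2).
have eta0 : 0 < eta by rewrite divr_gt0 //; lra.
have [n Sn] : exists n,
    ((h x - eta)%:E < cintegral mx (fun z => (approx setT phi n z)%:E))%E.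
  apply: contrapT => /forallNP H.
  have cv := int_approx_cvg _ _ (completed_measure_extension (mu:=mx)) phi (mphi x) phi0.
  have : (lim ((fun n => \int[completed_measure_extension (mu:=mx)]_z (approx setT phi n z)%:E) @ \oo) <= (h x - eta)%:E)%E.
    apply: lime_le; first by apply/cvg_ex; eexists; exact: cv.
    by apply: nearW => k; rewrite leNgt; apply/negP; exact: H.
  rewrite (cvg_lim _ cv) //.
  have := (hh V cVU x (WV x xW)).2; rewrite /cintegral => ->.
  by rewrite lee_fin; lra.
set a := approx setT phi n.
set b := fun z => h z - a z.
have ab z : a z <= h z by rewrite -lee_fin; exact: le_approx.
have b0 z : 0 <= b z by rewrite /b subr_ge0.
have ma y : measurable_fun (setT : set (CT (mu V y))) a.
  exact: (approx_mfun _ _ _ n (mphi y)).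
have mb y : measurable_fun (setT : set (CT (mu V y))) b.
  by apply: measurable_funB => //; exact: (umeas_mfun _ _ (finy y) uh).
have dec y : V y -> (h y)%:E = (cintegral (mu V y) (fun z => (a z)%:E) +
    cintegral (mu V y) (fun z => (b z)%:E))%E.
  move=> Vy; rewrite -(hh V cVU y Vy).2 /cintegral -ge0_integralD //.
  - by apply: eq_integral => z _; rewrite -EFinD /b; congr EFin; ring.
  - by move=> z _; rewrite lee_fin /a /approx addr_ge0 ?sumr_ge0 // => k _; rewrite mulr_ge0 // indicE.
  - by apply/measurable_EFinP; exact: ma.
  - by move=> z _; rewrite lee_fin.
  - by apply/measurable_EFinP; exact: mb.
have domb y : rho x y < ar -> (cintegral (mu V y) (fun z => (b z)%:E) <=
    K%:E * cintegral mx (fun z => (b z)%:E))%E.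
  move=> yW; apply: (cint_le _ _ _ _ (ltW K0)).
  - by move=> z; rewrite lee_fin.
  - by apply/measurable_EFinP; exact: mb.
  - by apply/measurable_EFinP; exact: mb.
  - exact: (ext_dom _ _ _ K0 (dom y yW)).
have rep A : @umeas _ _ R A -> exists g : X -> R, contat x g /\
    forall y, rho x y < ar -> mu_ext (mu V y) A = (g y)%:E.
  move=> uA; have [B [mB eB]] := ext_rep mx K A (ltW K0) (finy x) uA.
  exists (fun y => fine (mu V y B)); split; last first.
    by move=> y yW; rewrite (eB _ (dom y yW)) fineK //; exact: mu_fin.
  move=> e' e'0; have [dl [dl0 hdl]] := Hc V cV _ (GB cV mB) x (WV x xW) e' e'0.
  exists (Num.min dl ar); split; first by rewrite lt_min dl0.
  by move=> y; rewrite lt_min => /andP [ydl yar]; exact: hdl (WV y yar) ydl.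
have [s1 [cs1 es1]] := sum_rep (fun y => mu V y) (fun y => rho x y < ar) x
  (n * 2 ^ n) (fun k => k%:R * 2 ^- n) (dyadic_approx setT phi n)
  (fun k => rep _ (umeas_dyadic h n k uh)).
have [g [cg eg]] := rep _ (umeas_integer h n uh).
have [s [cs es]] : exists s, contat x s /\ forall y, rho x y < ar ->
    cintegral (mu V y) (fun z => (a z)%:E) = (s y)%:E.
  exists (fun y => s1 y + n%:R * g y); split.
    by apply: contat_add => //; exact: contat_scale.
  move=> y yW; rewrite /cintegral.
  rewrite (int_approx _ _ (completed_measure_extension (mu:=mu V y)) phi (mphi y) phi0 n).
  by rewrite EFinD EFinM -es1 // -eg //.
have [dl [dl0 hdl]] := cs eta eta0.
exists (Num.min dl ar); split; first by rewrite lt_min dl0.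
move=> y Uy; rewrite lt_min => /andP [ydl yar].
have ex := dec x (WV x xW); have ey := dec y (WV y yar).
rewrite (es x xW) in ex Sn; rewrite (es y yar) in ey.
have dby := domb y yar.
have hsy := hdl y ydl.
have Dx0 : (0 <= cintegral mx (fun z => (b z)%:E))%E.
  by apply: integral_ge0 => z _; rewrite lee_fin.
have Dy0 : (0 <= cintegral (mu V y) (fun z => (b z)%:E))%E.
  by apply: integral_ge0 => z _; rewrite lee_fin.
move: ex ey dby Dx0 Dy0.
case: (cintegral mx (fun z => (b z)%:E)) => [dx| |]; last 2 first.
- by move=> ex; exfalso; move: ex; rewrite addey.
- by move=> _ _ _; rewrite leeNy_eq.
case: (cintegral (mu V y) (fun z => (b z)%:E)) => [dy| |]; last 2 first.
- by move=> _ ey; exfalso; move: ey; rewrite addey.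
- by move=> _ _ _ _; rewrite leeNy_eq.
rewrite -!EFinD -EFinM !lee_fin => -[ex] [ey] dby dx0 dy0.
move: Sn; rewrite lte_fin => Sn.
have Kdx : K * dx <= K * eta by rewrite ler_pM2l //; lra.
have eK : K * eta = e - 2 * eta by rewrite /eta; field; lra.
have Keta0 : 0 <= K * eta by rewrite mulr_ge0 // ltW.
move: hsy; rewrite !ltr_norml => /andP [s1' s2'].
apply/andP; split; lra.
Qed.

End main.

Theorem proposition3p1 (d : measure_display) (X : measurableType d) (R : realType)
  (rho : X -> X -> R) (X0 : set X)
  (mu : set X -> X -> {measure set X -> \bar R})
  (alpha K : R) :
  is_metric rho -> rseparable rho -> rborel rho -> ropen rho X0 ->
  M0 rho X0 mu -> M1 rho X0 mu ->
  0 < alpha -> alpha < 1 -> 1 <= K ->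
  (forall (x0 : X) (r : R), X0 x0 -> 0 < r -> (r%:E < R0 rho X0 x0)%E ->
     forall h, Hbplus rho mu (rball rho x0 r) h ->
       harnack_ineq rho x0 (alpha * r) K h) ->
  (forall (x0 : X) (r : R), X0 x0 -> 0 < r -> (r%:E < R0 rho X0 x0)%E ->
     forall h, Hplus rho mu (rball rho x0 r) h ->
       harnack_ineq rho x0 (alpha * r) K h) /\
  ((forall U, calU rho X0 U -> forall h, Hbplus rho mu U h -> rcont_on rho U h) ->
   (forall U, calU rho X0 U -> forall h, Hplus rho mu U h -> rcont_on rho U h)).
Proof.
move=> mr _ _ _ hM0 hM1 a0 a1 K1 HH; split.
  move=> x0 r X0x r0 rR h hH.
  have K0 : 0 < K by apply: lt_le_trans K1.
  apply: (part1 _ _ _ mr hM0 hM1 _ _ _ _ _ a0 a1 K0 r0 rR _ hH).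
  by move=> r' r'0 r'R; apply: HH.
exact: (part2 _ _ _ mr hM0 hM1 _ _ a0 a1 K1 HH).
Qed.
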